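(* For $n,k\geqslant 0$ let $\mathfrak{f}_{n,k}$ be the number of words of length $n$ on the alphabet $\{1,\dots,k\}$ avoiding both patterns $010$ and $120$ and containing every letter of $\{1,\dots,k\}$ (so $\mathfrak{f}_{0,0}=1$, $\mathfrak{f}_{n,0}=0$ for $n\geqslant1$, $\mathfrak{f}_{0,k}=0$ for $k\geqslant 1$). Then for all $n,k\geqslant 1$, $$\mathfrak{f}_{n,k}=\sum_{p=1}^{n}\sum_{q=0}^{k-1}\mathfrak{f}_{p-1,q}\cdot\bigl(\mathfrak{f}_{n-p,k-q}+\mathfrak{f}_{n-p,k-q-1}\bigr),$$ and the generating function $F(x,y)=\sum_{n,k\geqslant0}\mathfrak{f}_{n,k}x^ny^k$ satisfies $(x+xy)F(x,y)^2-(x+1)F(x,y)+1=0$.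
   Context: A word contains a pattern $p$ if some subsequence is order-isomorphic to $p$; otherwise it avoids $p$. Avoiding $010$: no $i<j<l$ with $\omega_i=\omega_l<\omega_j$. Avoiding $120$: no $i<j<l$ with $\omega_l<\omega_i<\omega_j$. *)

(* Defs.v *)
From mathcomp Require Import all_boot all_order all_algebra.
Set Implicit Arguments. Unset Strict Implicit. Unset Printing Implicit Defensive.
Import GRing.Theory Num.Theory.

(* Words of length n over the alphabet {1,...,k} are encoded as n-tuples over
   'I_k = {0,...,k-1}; the shift by one is an order isomorphism, so pattern
   containment is unaffected. *)

Definition contains010 n k (w : n.-tuple 'I_k) : bool :=
  [exists i : 'I_n, exists j : 'I_n, exists l : 'I_n,
     [&& (i < j)%N, (j < l)%N,
         nat_of_ord (tnth w i) == nat_of_ord (tnth w l) &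
         (nat_of_ord (tnth w l) < nat_of_ord (tnth w j))%N]].

Definition contains120 n k (w : n.-tuple 'I_k) : bool :=
  [exists i : 'I_n, exists j : 'I_n, exists l : 'I_n,
     [&& (i < j)%N, (j < l)%N,
         (nat_of_ord (tnth w l) < nat_of_ord (tnth w i))%N &
         (nat_of_ord (tnth w i) < nat_of_ord (tnth w j))%N]].

Definition uses_all n k (w : n.-tuple 'I_k) : bool :=
  [forall c : 'I_k, c \in w].

Definition frakf (n k : nat) : nat :=
  #|[set w : n.-tuple 'I_k |
       [&& ~~ contains010 w, ~~ contains120 w & uses_all w]]|.

(* Formal power series in x, y with integer coefficients, given by their
   coefficient function: A n k = [x^n y^k] A. *)
Definition fps := nat -> nat -> int.

Local Open Scope ring_scope.

Definition fps_add (A B : fps) : fps := fun n k => A n k + B n k.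
Definition fps_opp (A : fps) : fps := fun n k => - A n k.
Definition fps_mul (A B : fps) : fps := fun n k =>
  \sum_(i < n.+1) \sum_(j < k.+1) A i j * B (n - i)%N (k - j)%N.
Definition fps_one : fps := fun n k => ((n == 0%N) && (k == 0%N))%:R.
Definition fps_x : fps := fun n k => ((n == 1%N) && (k == 0%N))%:R.
Definition fps_y : fps := fun n k => ((n == 0%N) && (k == 1%N))%:R.

Definition genF : fps := fun n k => (frakf n k)%:Z.

(* Main.v *)
Require Import Defs.
From mathcomp Require Import all_boot all_order all_algebra.
Import GRing.Theory Num.Theory.
From mathcomp Require Import zify.
Set Implicit Arguments. Unset Strict Implicit. Unset Printing Implicit Defensive.


Fixpoint rav (w : seq nat) : bool :=
  if w is x :: w' then
    rav w' && all (fun y => x < y) (drop (find (fun y => x < y) w') w')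
  else true.

Lemma rav_catr P T : rav (P ++ T) -> rav T.
Proof. by elim: P => //= x P IH /andP[/IH]. Qed.

Lemma rav_catl P T : rav (P ++ T) -> rav P.
Proof.
elim: P => //= x P IH /andP[/IH -> H] /=.
move: H; rewrite find_cat; case: ifP => hP.
  by rewrite drop_cat -has_find hP all_cat => /andP[].
by rewrite (hasNfind (negbT hP)) drop_size.
Qed.

Lemma all_drop' (a : pred nat) n s : all a s -> all a (drop n s).
Proof. by rewrite -{1}(cat_take_drop n s) all_cat => /andP[]. Qed.

Lemma rav_cat_lt P T : rav P -> rav T ->
  (forall x y, x \in P -> y \in T -> x < y) -> rav (P ++ T).
Proof.
elim: P => //= x P IH /andP[rP H] rT hlt.
rewrite IH //; last by move=> a b aP bT; apply: hlt; rewrite ?inE ?aP ?orbT.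
have allT : all (fun y => x < y) T.
  by apply/allP => y yT; apply: hlt; rewrite ?inE ?eqxx.
rewrite /= find_cat; case: ifP => hP.
  by rewrite drop_cat -has_find hP all_cat H.
rewrite drop_cat ltnNge leq_addr /= addKn. exact: all_drop'.
Qed.

Lemma rav_cons_max m T : all (fun y => y <= m) T -> rav (m :: T) = rav T.
Proof.
move=> hT /=; rewrite hasNfind ?drop_size ?andbT //.
apply/hasPn => y /(allP hT); by rewrite ltnNge => ->.
Qed.

Lemma rav_shift q S : rav (map (addn q) S) = rav S.
Proof.
elim: S => //= x S ->; congr (_ && _).
rewrite find_map -map_drop.
rewrite (@eq_find _ _ (fun y => x < y)); last by move=> y /=; rewrite ltn_add2l.
rewrite all_map; apply: eq_all => y /=; by rewrite ltn_add2l.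
Qed.

Lemma rav_split P z V : rav (P ++ z :: V) -> forall x, x \in P -> x < z ->
  all (fun y => x < y) V.
Proof.
elim: P => //= x' P IH /andP[r H] x; rewrite inE => /orP[/eqP -> | xP] lt; last exact: IH.
move: H; rewrite find_cat; case: ifP => hP.
  by rewrite drop_cat -has_find hP all_cat => /andP[_] /= /andP[].
by rewrite /= lt addn0 drop_cat ltnn subnn /= => /andP[].
Qed.


Definition Pat (w : seq nat) := exists i j l, [/\ i < j, j < l, l < size w,
  nth 0 w i < nth 0 w j & nth 0 w l <= nth 0 w i].

Definition HPat x (w : seq nat) := exists j l, [/\ j < l, l < size w,
  x < nth 0 w j & nth 0 w l <= x].

Lemma head_cond x w :
  ~~ all (fun y => x < y) (drop (find (fun y => x < y) w) w) <-> HPat x w.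
Proof.
set a := (fun y => x < y); set f := find a w.
rewrite -has_predC; split.
  case/(has_nthP 0) => i; rewrite size_drop nth_drop /= -leqNgt => hi hn.
  case: i hi hn => [|i] hi hn.
    have: has a w by rewrite has_find; lia.
    move/(nth_find 0); rewrite /a -/f; move: hn; rewrite addn0; lia.
  exists f, (f + i.+1); split => //; try lia.
  by apply: (nth_find 0); rewrite has_find; lia.
case=> j [l [hjl hl hj hlx]].
have hf : f <= j.
  rewrite leqNgt; apply/negP => /(before_find 0); rewrite /a hj.
  by [].
apply/(has_nthP 0); exists (l - f); rewrite ?size_drop ?nth_drop; try lia.
by rewrite subnKC /= -?leqNgt //; lia.
Qed.

Lemma Pat_cons x w : Pat (x :: w) <-> Pat w \/ HPat x w.
Proof.
split.
  case=> [[|i] [[|j] [[|l] [hij hjl hl hi hli]]]] //=.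
    by right; exists j, l; split.
  by left; exists i, j, l; split.
case=> [[i [j [l [hij hjl hl hi hli]]]]|[j [l [hjl hl hj hlx]]]].
  by exists i.+1, j.+1, l.+1; split.
by exists 0, j.+1, l.+1; split.
Qed.

Lemma rav_Pat w : ~~ rav w <-> Pat w.
Proof.
elim: w => [|x w IH] /=.
  by split => // [[i [j [l [_ _ hl _ _]]]]].
rewrite negb_and Pat_cons -head_cond -IH.
by split => /orP.
Qed.

Definition good k (w : seq nat) :=
  [&& rav w, all (fun c => c < k) w & all (fun c => c \in w) (iota 0 k)].

Lemma nth_val n k (t : n.-tuple 'I_k) (i : 'I_n) :
  nth 0 (map val t) i = tnth t i.
Proof. by rewrite (nth_map (tnth t i)) ?size_tuple // -tnth_nth. Qed.

Lemma contains_Pat n k (t : n.-tuple 'I_k) :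
  (contains010 t || contains120 t) <-> Pat (map val t).
Proof.
split.
  case/orP => /existsP [i /existsP [j /existsP [l /and4P [hij hjl heq hlt]]]];
  exists i, j, l; rewrite !nth_val size_map size_tuple; split => //; lia.
case=> i [j [l [hij hjl hl hi hli]]].
rewrite size_map size_tuple in hl.
have hj : j < n by lia. have hi' : i < n by lia.
move: hi hli; rewrite -[i]/(nat_of_ord (Ordinal hi')) -[j]/(nat_of_ord (Ordinal hj))
  -[l]/(nat_of_ord (Ordinal hl)) !nth_val => hi hli.
rewrite leq_eqVlt in hli; case/orP: hli => hli; apply/orP; [left|right];
apply/existsP; exists (Ordinal hi'); apply/existsP; exists (Ordinal hj);
apply/existsP; exists (Ordinal hl); apply/and4P; split => //=.
- by rewrite eq_sym.
- by move/eqP: hli => ->.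
Qed.

Lemma tup_good n k (t : n.-tuple 'I_k) :
  [&& ~~ contains010 t, ~~ contains120 t & uses_all t] = good k (map val t).
Proof.
rewrite andbA -negb_or /good.
have -> : all (fun c => c < k) (map val t).
  by rewrite all_map; apply/allP => c _ /=.
have -> : uses_all t = all (fun c => c \in map val t) (iota 0 k).
  apply/forallP/allP.
    move=> H c; rewrite mem_iota add0n => hc.
    by have := H (Ordinal hc); move/(map_f val).
  move=> H c; have := H (val c); rewrite mem_iota ltn_ord mem_map //.
    by move=> /(_ isT).
  exact: val_inj.
rewrite /=; congr (_ && _).
case E: (rav _).
  by apply/negP => /contains_Pat/rav_Pat; rewrite E.
by apply/negPn/contains_Pat/rav_Pat; rewrite E.
Qed.


Fixpoint W (n k : nat) : seq (seq nat) :=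
  if n is n'.+1 then [seq c :: w | c <- iota 0 k, w <- W n' k] else [:: [::]].

Lemma mem_W n k w : (w \in W n k) = (size w == n) && all (fun c => c < k) w.
Proof.
elim: n w => [|n IH] [|c w] //=.
  by apply/allpairsP => [[[a b] /= [_ _]]].
apply/allpairsP/idP.
  case=> [[a b] /= [ha hb [ec ew]]]; subst; move: ha hb; rewrite mem_iota IH add0n.
  move=> /andP[_ h1] /andP[h2 h3]; by rewrite eqSS h1 h2 h3.
move=> /andP[hs /andP[hc hw]]; rewrite eqSS in hs; exists (c, w); split => //=.
  by rewrite mem_iota.
by rewrite IH hs.
Qed.

Lemma W_uniq n k : uniq (W n k).
Proof.
elim: n => [|n IH] //=; apply: allpairs_uniq => //; first exact: iota_uniq.
by move=> [a b] [c d] _ _ /= [-> ->].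
Qed.

Definition G n k := filter (good k) (W n k).
Definition g n k := size (G n k).

Lemma G_uniq n k : uniq (G n k).
Proof. exact/filter_uniq/W_uniq. Qed.

Lemma mem_G n k w : (w \in G n k) = good k w && (size w == n).
Proof.
rewrite mem_filter mem_W /good; case: (size w == n); rewrite ?andbT ?andbF //.
by case: (rav w); case: (all (fun c => c < k) w); rewrite /= ?andbT ?andbF.
Qed.

Lemma size_bij (A B : eqType) (X : seq A) (Y : seq B) (enc : A -> B) (dec : B -> A) :
  uniq X -> uniq Y -> {in X, forall x, enc x \in Y} -> {in Y, forall y, dec y \in X} ->
  {in X, cancel enc dec} -> {in Y, cancel dec enc} -> size X = size Y.
Proof.
move=> uX uY hE hD cE cD.
rewrite -(size_map enc); apply: perm_size; apply: uniq_perm => //.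
  by rewrite (map_inj_in_uniq (can_in_inj cE)).
move=> y; apply/mapP/idP.
  by case=> x xX ->; apply: hE.
by move=> yY; exists (dec y); [apply: hD | rewrite cD].
Qed.

Lemma frakf_g n k : frakf n k = g n k.
Proof.
rewrite /frakf cardE.
set A := [set _ | _].
rewrite -(size_map (fun t : n.-tuple 'I_k => map val (val t))).
apply: perm_size; apply: uniq_perm.
- rewrite map_inj_uniq ?enum_uniq //.
  by move=> t1 t2 /(inj_map val_inj) /val_inj.
- exact: G_uniq.
move=> s; apply/mapP/idP.
  case=> t; rewrite mem_enum inE tup_good => ht ->.
  by rewrite mem_G ht size_map size_tuple eqxx.
rewrite mem_G => /andP[hg /eqP hs].
have hall : all (fun c => c < k) s by case/and3P: hg.
set u := pmap (insub : nat -> option 'I_k) s.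
have hu : map val u = s.
  rewrite (pmap_filter (@insubK _ _ _)); apply/all_filterP; apply/allP => c /(allP hall) hc.
  by rewrite /= isSome_insub.
have hsz : size u == n by rewrite -(size_map val) hu hs.
exists (Tuple hsz) => //.
by rewrite mem_enum inE tup_good /= hu.
Qed.


Definition qf (P : seq nat) := foldr (fun x acc => maxn x.+1 acc) 0 P.

Lemma qf_lt P x : x \in P -> x < qf P.
Proof.
elim: P => //= y P IH; rewrite inE => /orP[/eqP ->|/IH]; lia.
Qed.

Lemma qf_le P B : (forall x, x \in P -> x < B) -> qf P <= B.
Proof.
elim: P => //= y P IH H.
have := H y (mem_head _ _); have := IH (fun x xP => H x (@mem_behead _ (y :: P) _ xP)).
lia.
Qed.

Lemma qf_attain P : 0 < qf P -> (qf P).-1 \in P.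
Proof.
elim: P => //= y P IH; rewrite -/(qf P) => h; rewrite inE.
case: (leqP (qf P) y.+1) => h1.
  by rewrite eqxx.
rewrite IH ?orbT //; lia.
Qed.

Definition enc m (x : (nat * nat) * (seq nat * (nat * seq nat))) : seq nat :=
  x.2.1 ++ m :: map (addn x.1.2) x.2.2.2.

Definition dec m (w : seq nat) : (nat * nat) * (seq nat * (nat * seq nat)) :=
  let i := index m w in let P := take i w in let T := drop i.+1 w in
  let q := qf P in ((i.+1, q), (P, (nat_of_bool (m \notin T), map (subn^~ q) T))).

Definition Xs n m : seq ((nat * nat) * (seq nat * (nat * seq nat))) :=
  [seq (pq, r) | pq <- [seq (p, q) | p <- iota 1 n, q <- iota 0 m.+1],
     r <- [seq (P, bS) | P <- G pq.1.-1 pq.2,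
            bS <- [seq (b, SS) | b <- iota 0 2, SS <- G (n - pq.1) (m.+1 - pq.2 - b)]]].

Lemma mem_Xs n m p q P b S0 :
  (((p, q), (P, (b, S0))) \in Xs n m) =
  [&& 0 < p <= n, q <= m, P \in G p.-1 q, b < 2 & S0 \in G (n - p) (m.+1 - q - b)].
Proof.
apply/allpairsPdep/and5P.
  case=> [[p' q'] [[P' [b' S']] [hpq hr /= [e1 e2 e3 e4 e5]]]]; subst.
  case/allpairsP: hpq => [[x y] [h1 h2 /= [e1 e2]]]; subst.
  case/allpairsP: hr => [[x1 [x2 x3]] [h3 h4 /= [e1 e2 e3]]]; subst.
  case/allpairsPdep: h4 => [x4 [x5 [h5 h6 /= [e1 e2]]]]; subst.
  move: h1 h2 h5; rewrite !mem_iota; split => //; lia.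
case=> h1 h2 h3 h4 h5; exists (p, q), (P, (b, S0)); split => //.
  by apply/allpairsP; exists (p, q); rewrite !mem_iota; split => //=; lia.
apply/allpairsP; exists (P, (b, S0)); split => //.
by apply/allpairsPdep; exists b, S0; rewrite !mem_iota; split => //; lia.
Qed.

Lemma Xs_uniq n m : uniq (Xs n m).
Proof.
apply: allpairs_uniq_dep.
- apply: allpairs_uniq; try exact: iota_uniq.
  by move=> [a b] [c d] _ _ /= [-> ->].
- move=> pq _; apply: allpairs_uniq.
  + exact: G_uniq.
  + apply: allpairs_uniq_dep; first exact: iota_uniq.
      by move=> b _; apply: G_uniq.
    by move=> [a b] [c d] _ _ /= [ea eb]; subst.
  by move=> [a b] [c d] _ _ /= [-> ->].
by move=> [a b] [c d] _ _ /= [ea eb]; subst.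
Qed.


Lemma enc_good n m p q P b S0 : 0 < p <= n -> q <= m -> P \in G p.-1 q -> b < 2 ->
  S0 \in G (n - p) (m.+1 - q - b) -> P ++ m :: map (addn q) S0 \in G n m.+1.
Proof.
move=> hp hq; rewrite !mem_G => /andP[/and3P[rP aP uP] /eqP sP] hb.
move=> /andP[/and3P[rS aS uS] /eqP sS].
apply/andP; split; last first.
  rewrite size_cat /= size_map sP sS; apply/eqP; lia.
apply/and3P; split.
- apply: rav_cat_lt => //.
    rewrite rav_cons_max ?rav_shift //.
    by rewrite all_map; apply/allP => y /(allP aS) /=; lia.
  move=> x y /(allP aP) /= hx; rewrite inE => /orP[/eqP ->| /mapP [z _ ->]]; lia.
- rewrite all_cat /= all_map; apply/and3P; split.
  + by apply/allP => x /(allP aP) /=; lia.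
  + by [].
  + by apply/allP => y /(allP aS) /=; lia.
- apply/allP => c; rewrite mem_iota add0n => hc; rewrite mem_cat inE.
  case: (ltnP c q) => hcq.
    by have := allP uP c; rewrite mem_iota hcq => /(_ isT) ->.
  case: (eqVneq c m) => [-> | hcm]; first by rewrite orbT.
  apply/orP; right; apply/orP; right; apply/mapP; exists (c - q); last lia.
  apply: (allP uS); rewrite mem_iota; lia.
Qed.

Lemma dec_enc n m p q P b S0 : 0 < p <= n -> q <= m -> P \in G p.-1 q -> b < 2 ->
  S0 \in G (n - p) (m.+1 - q - b) ->
  dec m (P ++ m :: map (addn q) S0) = ((p, q), (P, (b, S0))).
Proof.
move=> hp hq; rewrite !mem_G => /andP[/and3P[rP aP uP] /eqP sP] hb.
move=> /andP[/and3P[rS aS uS] /eqP sS].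
have mP : m \notin P by apply/negP => /(allP aP) /=; lia.
rewrite /dec.
have -> : index m (P ++ m :: map (addn q) S0) = size P.
  by rewrite index_cat (negbTE mP) /= eqxx addn0.
rewrite take_size_cat // drop_cat ltnNge leqnSn /= subSnn /= drop0.
have -> : qf P = q.
  apply/eqP; rewrite eqn_leq qf_le; last by move=> x /(allP aP).
  case: q hq aP uP {rS aS uS hb} => // q' hq aP uP /=.
  by apply: qf_lt; apply: (allP uP); rewrite mem_iota; lia.
have -> : map (subn^~ q) (map (addn q) S0) = S0.
  by rewrite -map_comp (@eq_map _ _ _ id) ?map_id // => y /=; rewrite addKn.
have -> : (m \notin map (addn q) S0 : nat) = b.
  case: b hb aS uS {sS} => [|[|//]] _ aS uS.
    suff -> : m \in map (addn q) S0 by [].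
    apply/mapP; exists (m - q); last lia.
    by apply: (allP uS); rewrite mem_iota; lia.
  suff -> : m \in map (addn q) S0 = false by [].
  apply/negP => /mapP [y /(allP aS) /= hy]; lia.
by rewrite sP; congr ((_, _), _); lia.
Qed.


Lemma dec_good n m w : w \in G n m.+1 ->
  dec m w \in Xs n m /\ enc m (dec m w) = w.
Proof.
rewrite mem_G => /andP[/and3P[rw aw uw] /eqP sw].
have mw : m \in w by apply: (allP uw); rewrite mem_iota add0n ltnSn.
rewrite /dec /enc /=.
set i := index m w; set P := take i w; set T := drop i.+1 w.
have hi : i < size w by rewrite index_mem.
have ew : w = P ++ m :: T by rewrite -{1}(cat_take_drop i w) (drop_nth 0 hi) nth_index.
have sP : size P = i by rewrite size_takel // ltnW.
have mP : m \notin P.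
  apply/negP => hmP; have := index_mem m P; rewrite hmP sP.
  have : index m w = i by [].
  by rewrite {1}ew index_cat hmP => ->; rewrite ltnn.
have wm : forall x, x \in w -> x <= m by move=> x /(allP aw).
rewrite ew in rw.
have Pw : forall x, x \in P -> x \in w by move=> x xP; rewrite ew mem_cat xP.
have Tw : forall x, x \in T -> x \in w by move=> x xT; rewrite ew mem_cat inE xT !orbT.
have PT : forall x y, x \in P -> y \in T -> x < y.
  move=> x y xP yT.
  have hx : x < m.
    rewrite ltn_neqAle wm ?Pw // andbT; apply/eqP => ex; by rewrite -ex xP in mP.
  exact: (allP (rav_split rw xP hx)).
have down : forall x z, x \in P -> z < x -> z \in P.
  move=> x z xP zx.
  have : z \in w by apply: (allP uw); rewrite mem_iota; have := wm x (Pw x xP); lia.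
  rewrite ew mem_cat inE => /or3P [//| /eqP ez | zT].
    by have := wm x (Pw x xP); lia.
  by have := PT x z xP zT; lia.
set q := qf P.
have Pq : forall x, x \in P -> x < q by move=> x; apply: qf_lt.
have qP : forall c, c < q -> c \in P.
  move=> c cq; have hq := qf_attain (leq_ltn_trans (leq0n c) cq).
  rewrite -/q in hq; case: (ltnP c q.-1) => hc; first exact: down hq hc.
  by have -> : c = q.-1 by lia.
have qm : q <= m.
  apply: qf_le => x xP; rewrite ltn_neqAle wm ?Pw // andbT.
  by apply/eqP => ex; rewrite -ex xP in mP.
have Tq : forall y, y \in T -> q <= y.
  move=> y yT; case: (posnP q) => [-> //| q0].
  by have := PT _ _ (qf_attain q0) yT; rewrite -/q; lia.
have rT : rav T by have := rav_catr rw => /= /andP[].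
have hT : map (addn q) (map (subn^~ q) T) = T.
  rewrite -map_comp -[RHS]map_id; apply/eq_in_map => y /Tq /= hy; lia.
split; last by rewrite hT ew.
rewrite mem_Xs; apply/and5P; split.
- by rewrite sw in hi; lia.
- exact: qm.
- rewrite mem_G sP eqxx andbT; apply/and3P; split.
  + exact: rav_catl rw.
  + by apply/allP => x /Pq.
  + by apply/allP => c; rewrite mem_iota => /andP[_ /qP].
- by case: (m \notin T).
rewrite mem_G size_map size_drop -sw eqxx andbT /good.
apply/and3P; split.
- by rewrite -(rav_shift q) hT.
- apply/allP => y /mapP [z zT ->]; have := Tq z zT; have := wm z (Tw z zT).
  case hmT: (m \in T) => /=.
    lia.
  have : z != m by apply: contraNneq (negbT hmT) => <-.
  lia.
- apply/allP => c; rewrite mem_iota add0n => hc.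
  apply/mapP; exists (q + c); last lia.
  have : q + c \in w.
    apply: (allP uw); rewrite mem_iota; move: hc; case: (m \in T) => /=; lia.
  rewrite {1}ew mem_cat inE => /or3P [/Pq|/eqP ez|//]; first lia.
  move: hc; case hmT: (m \in T) => /=; last lia.
  by rewrite ez.
Qed.


Lemma g_rec n m : g n m.+1 =
  \sum_(1 <= p < n.+1) \sum_(0 <= q < m.+1)
     g p.-1 q * (g (n - p) (m.+1 - q) + g (n - p) (m.+1 - q).-1).
Proof.
have -> : g n m.+1 = size (Xs n m).
  symmetry; apply: (@size_bij _ _ _ _ (enc m) (dec m)).
  - exact: Xs_uniq.
  - exact: G_uniq.
  - move=> [[p q] [P [b S0]]]; rewrite mem_Xs => /and5P[h1 h2 h3 h4 h5]. exact: enc_good h1 h2 h3 h4 h5.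
  - by move=> w /dec_good [].
  - move=> [[p q] [P [b S0]]]; rewrite mem_Xs => /and5P[h1 h2 h3 h4 h5]; rewrite /enc /=. exact: dec_enc h1 h2 h3 h4 h5.
  - by move=> w /dec_good [].
rewrite size_allpairs_dep sumnE big_map big_allpairs /index_iota subSS subn0 subn0.
apply: eq_bigr => p _; apply: eq_bigr => q _.
rewrite size_allpairs size_allpairs_dep /= subn0 subn1 addn0.
by [].
Qed.

Lemma f_rec n k : (1 <= n)%N -> (1 <= k)%N ->
     frakf n k =
     (\sum_(1 <= p < n.+1) \sum_(0 <= q < k)
        frakf p.-1 q * (frakf (n - p) (k - q) + frakf (n - p) (k - q).-1))%N.
Proof.
move=> _; case: k => // m _.
rewrite frakf_g g_rec; apply: eq_bigr => p _; apply: eq_bigr => q _.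
by rewrite !frakf_g.
Qed.

Lemma g_n0 n : g n 0 = (n == 0).
Proof. by case: n. Qed.

Lemma g_0k k : g 0 k = (k == 0).
Proof. by case: k. Qed.


Definition FFn a b := (\sum_(i < a.+1) \sum_(j < b.+1) g i j * g (a - i) (b - j))%N.

Lemma sum_last_col n k :
  (\sum_(i < n.+1) g i k * g (n - i) 0 = g n k)%N.
Proof.
rewrite big_ord_recr /= subnn g_n0 muln1 big1 ?add0n // => i _.
rewrite g_n0; have : (n - i != 0)%N by have := ltn_ord i; lia.
by move/negbTE => ->; rewrite muln0.
Qed.

Lemma nat_ident n k :
  (FFn n k.+1 + FFn n k = g n k.+1 + g n.+1 k.+1)%N.
Proof.
have -> : FFn n k.+1 =
  (\sum_(i < n.+1) \sum_(j < k.+1) g i j * g (n - i) (k.+1 - j) + g n k.+1)%N.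
  rewrite /FFn -sum_last_col -big_split /=; apply: eq_bigr => i _.
  by rewrite big_ord_recr /= subnn.
rewrite (g_rec n.+1 k) big_add1 /= big_mkord addnAC addnC; congr (_ + _)%N.
rewrite /FFn -big_split /=; apply: eq_bigr => i _.
rewrite big_mkord -big_split /=; apply: eq_bigr => j _.
rewrite subSS mulnDr; congr (_ + _)%N.
by have := ltn_ord j; move=> hj; rewrite subSn //.
Qed.

Section GF.
Local Open Scope ring_scope.

Definition mono (a b : nat) : fps := fun n k => ((n == a) && (k == b))%:R.

Lemma mul_mono a b (A : fps) n k : fps_mul (mono a b) A n k =
  if ((a <= n) && (b <= k))%N then A (n - a)%N (k - b)%N else 0.
Proof.
rewrite /fps_mul /mono.
transitivity (\sum_(i < n.+1 | i == a :> nat) \sum_(j < k.+1 | j == b :> nat)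
   A (n - i)%N (k - j)%N).
  rewrite [RHS]big_mkcond; apply: eq_bigr => i _ /=.
  case: (i == a :> nat) => /=; last by rewrite big1 // => j _; rewrite mul0r.
  rewrite [RHS]big_mkcond; apply: eq_bigr => j _ /=.
  by case: (j == b :> nat); rewrite /= ?mul1r ?mul0r.
rewrite (big_ord1_eq _ (fun i => \sum_(j < k.+1 | j == b :> nat) A (n - i)%N (k - j)%N)).
rewrite (big_ord1_eq _ (fun j => A (n - a)%N (k - j)%N)) !ltnS.
by case: (a <= n)%N; case: (b <= k)%N.
Qed.

Lemma fps_mul_extl (A A' B : fps) n k : (forall i j, A i j = A' i j) ->
  fps_mul A B n k = fps_mul A' B n k.
Proof. by move=> h; rewrite /fps_mul; apply: eq_bigr => i _; apply: eq_bigr => j _; rewrite h. Qed.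

Lemma fps_mulDl (A B C : fps) n k :
  fps_mul (fps_add A B) C n k = fps_mul A C n k + fps_mul B C n k.
Proof.
rewrite /fps_mul -big_split; apply: eq_bigr => i _ /=.
rewrite -big_split; apply: eq_bigr => j _ /=; exact: mulrDl.
Qed.

Lemma xy_mono i j : fps_mul fps_x fps_y i j = mono 1 1 i j.
Proof.
rewrite (@fps_mul_extl _ (mono 1 0)) // mul_mono /mono /fps_y.
by case: i => [|i] //=; rewrite subn0 subn1 /=; case: i.
Qed.

Lemma genFE n k : genF n k = (g n k)%:R.
Proof. by rewrite /genF frakf_g natz. Qed.

Lemma FFE n k : fps_mul genF genF n k = (FFn n k)%:R.
Proof.
rewrite /fps_mul /FFn natr_sum; apply: eq_bigr => i _.
rewrite natr_sum; apply: eq_bigr => j _; by rewrite natrM !genFE.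
Qed.

Lemma gf_ident n k :
     fps_add
       (fps_add
          (fps_mul (fps_add fps_x (fps_mul fps_x fps_y)) (fps_mul genF genF))
          (fps_opp (fps_mul (fps_add fps_x fps_one) genF)))
       fps_one n k = 0%R.
Proof.
rewrite /fps_add /fps_opp !fps_mulDl.
rewrite (@fps_mul_extl fps_x (mono 1 0) (fps_mul genF genF)) //.
rewrite (@fps_mul_extl (fps_mul fps_x fps_y) (mono 1 1) (fps_mul genF genF)); last exact: xy_mono.
rewrite (@fps_mul_extl fps_x (mono 1 0) genF) //.
rewrite (@fps_mul_extl fps_one (mono 0 0) genF) //.
rewrite !mul_mono /fps_one !subn0 !genFE !FFE.
case: n => [|n] /=.
  rewrite !add0r; case: k => [|k] /=; rewrite g_0k /=; by rewrite ?subrr ?addr0 ?oppr0.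
rewrite subn1 /=.
case: k => [|k] /=.
  rewrite addr0 /FFn g_n0 /= addr0.
  rewrite (big_ord_recl n) [X in (_ + X)%N]big1 ?addn0; last first.
    by move=> i _; rewrite big_ord1 /= g_n0.
  rewrite big_ord1 /= !g_n0 subn0 mul1n.
  by case: n => [|n] /=; rewrite ?subrr ?oppr0 ?addr0.
rewrite subn1 /= addr0 opprD addrA.
apply/eqP; rewrite subr_eq0 subr_eq -!natrD; apply/eqP; congr (_%:R).
rewrite nat_ident; lia.
Qed.

End GF.

Theorem mainTheorem4 :
  (forall n k : nat, (1 <= n)%N -> (1 <= k)%N ->
     frakf n k =
     (\sum_(1 <= p < n.+1) \sum_(0 <= q < k)
        frakf p.-1 q * (frakf (n - p) (k - q) + frakf (n - p) (k - q).-1))%N)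
  /\
  (forall n k : nat,
     fps_add
       (fps_add
          (fps_mul (fps_add fps_x (fps_mul fps_x fps_y)) (fps_mul genF genF))
          (fps_opp (fps_mul (fps_add fps_x fps_one) genF)))
       fps_one n k = 0%R).
Proof.
split; [exact: f_rec | exact: gf_ident].
Qed.
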